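(* Let $T\in\mathcal{L}(\mathcal{H})$ be an SD operator. Then for every integer $n\ge1$, $T$ is $n$-EP if and only if $T$ is $n$-normal.
   Context: $\mathcal{H}$ is a Hilbert space, $\mathcal{L}(\mathcal{H})$ the bounded operators on it. For $T$ with closed range, $T^\dagger$ is its Moore–Penrose inverse (unique solution of $TT^\dagger T=T$, $T^\dagger TT^\dagger=T^\dagger$, $(T^\dagger T)^*=T^\dagger T$, $(TT^\dagger)^*=TT^\dagger$). $T$ is SD if it has closed range and $T^*T^\dagger=T^\dagger T^*$. $T$ is $n$-EP if it has closed range and $T^nT^\dagger=T^\dagger T^n$. $T$ is $n$-normal if $T^nT^*=T^*T^n$. *)

(* Defs.v *)
From mathcomp Require Import all_boot all_order all_algebra.
From mathcomp Require Import complex.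
From mathcomp Require Import reals.
Set Implicit Arguments. Unset Strict Implicit. Unset Printing Implicit Defensive.
Import Order.TTheory GRing.Theory Num.Theory.
Local Open Scope ring_scope.

Section Hilbert.
Variable R : realType.
Local Notation C := (R[i]).
Variable V : lmodType C.
Variable ip : V -> V -> C.

Definition is_inner_product : Prop :=
  [/\ (forall (a : C) (x y z : V), ip (a *: x + y) z = a * ip x z + ip y z),
      (forall x y : V, ip y x = Num.conj (ip x y)),
      (forall x : V, 0 <= ip x x) &
      (forall x : V, ip x x = 0 -> x = 0)].

Definition hnorm (x : V) : R := Num.sqrt (complex.Re (ip x x)).

Definition hcvg (u : nat -> V) (x : V) : Prop :=
  forall e : R, 0 < e -> exists N : nat, forall n, (N <= n)%N -> hnorm (u n - x) < e.

Definition hcauchy (u : nat -> V) : Prop :=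
  forall e : R, 0 < e -> exists N : nat, forall m n, (N <= m)%N -> (N <= n)%N ->
    hnorm (u m - u n) < e.

Definition is_hilbert : Prop :=
  is_inner_product /\ forall u, hcauchy u -> exists x, hcvg u x.

Definition bounded_op (T : V -> V) : Prop :=
  (forall (a : C) (x y : V), T (a *: x + y) = a *: T x + T y) /\
  exists M : R, forall x, hnorm (T x) <= M * hnorm x.

Definition is_adjoint (T S : V -> V) : Prop :=
  bounded_op S /\ forall x y, ip (T x) y = ip x (S y).

Definition closed_range (T : V -> V) : Prop :=
  forall (u : nat -> V) (x : V), (forall n, exists y, u n = T y) -> hcvg u x ->
    exists y, x = T y.

Definition is_MP_inverse (T D : V -> V) : Prop :=
  [/\ bounded_op D,
      T \o D \o T = T,
      D \o T \o D = D,
      is_adjoint (D \o T) (D \o T) &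
      is_adjoint (T \o D) (T \o D)].

Definition op_pow (T : V -> V) (n : nat) : V -> V := fun x => iter n T x.

Definition is_SD (T Tstar Tdag : V -> V) : Prop :=
  closed_range T /\ Tstar \o Tdag = Tdag \o Tstar.

Definition is_nEP (n : nat) (T Tdag : V -> V) : Prop :=
  closed_range T /\ op_pow T n \o Tdag = Tdag \o op_pow T n.

Definition is_nnormal (n : nat) (T Tstar : V -> V) : Prop :=
  op_pow T n \o Tstar = Tstar \o op_pow T n.

End Hilbert.

(* Main.v *)
Require Import Defs.
From mathcomp Require Import all_boot all_order all_algebra.
From mathcomp Require Import complex.
From mathcomp Require Import reals.
From Stdlib Require Import FunctionalExtensionality.
Local Open Scope ring_scope.
Import Order.TTheory GRing.Theory Num.Theory.
Set Implicit Arguments. Unset Strict Implicit.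

Section Aux.
Variables (R : realType) (V : lmodType (R[i])) (ip : V -> V -> R[i]).
Hypothesis hip : is_inner_product ip.

Lemma ip_subl x y z : ip (x - y) z = ip x z - ip y z.
Proof.
case: hip => H1 _ _ _.
by rewrite addrC -scaleN1r H1 mulN1r addrC.
Qed.

Lemma ip_conj x y : ip y x = Num.conj (ip x y).
Proof. by case: hip. Qed.

Lemma ip0l z : ip 0 z = 0.
Proof. by rewrite -(subrr 0) ip_subl subrr. Qed.

Lemma ip0r z : ip z 0 = 0.
Proof. by rewrite ip_conj ip0l conjC0. Qed.

Lemma ext_l u v : (forall z, ip u z = ip v z) -> u = v.
Proof.
move=> H; case: hip => _ _ _ H4.
apply/eqP; rewrite -subr_eq0; apply/eqP; apply: H4.
by rewrite ip_subl H subrr.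
Qed.

Definition adj (A B : V -> V) := forall x y, ip (A x) y = ip x (B y).

Lemma adj_sym A B : adj A B -> adj B A.
Proof. by move=> H x y; rewrite ip_conj -H ip_conj conjCK. Qed.

Lemma adj_comp A A' B B' : adj A A' -> adj B B' -> adj (A \o B) (B' \o A').
Proof. by move=> HA HB x y /=; rewrite HA HB. Qed.

Lemma adj_uniqL A B X : adj A X -> adj B X -> forall x, A x = B x.
Proof. by move=> HA HB x; apply: ext_l => z; rewrite HA HB. Qed.

Lemma adj_eqR A X Y : adj A X -> (forall y, X y = Y y) -> adj A Y.
Proof. by move=> H E x y; rewrite H E. Qed.

Definition lin (f : V -> V) := forall (a : R[i]) x y, f (a *: x + y) = a *: f x + f y.

Lemma linB f : lin f -> forall x y, f (x - y) = f x - f y.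
Proof. by move=> H x y; rewrite addrC -scaleN1r H scaleN1r addrC. Qed.

Lemma lin0 f : lin f -> f 0 = 0.
Proof. by move=> H; have := linB H 0 0; rewrite !subrr. Qed.

Lemma linD f : lin f -> forall x y, f (x + y) = f x + f y.
Proof. by move=> H x y; have := H 1 x y; rewrite !scale1r. Qed.

Lemma lin_iter f n : lin f -> lin (fun x => iter n f x).
Proof.
move=> H; elim: n => [|n IH] a x y //=.
by rewrite IH H.
Qed.

Lemma adj_iter A B n : adj A B -> adj (fun x => iter n A x) (fun x => iter n B x).
Proof.
move=> H; elim: n => [|n IH] x y //=.
by rewrite H IH -iterSr.
Qed.

End Aux.

Theorem mainTheorem10 (R : realType) (V : lmodType (R[i])) (ip : V -> V -> R[i])
  (T Tstar Tdag : V -> V) :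
  is_hilbert ip ->
  bounded_op ip T ->
  is_adjoint ip T Tstar ->
  closed_range ip T ->
  is_MP_inverse ip T Tdag ->
  is_SD ip T Tstar Tdag ->
  forall n : nat, (1 <= n)%N ->
    (is_nEP ip n T Tdag <-> is_nnormal n T Tstar).
Proof.
move=> [hip _] [linT _] [[linTs _] adjT] clT [[linDg _] TDT DTD [_ adjQ] [_ adjP]] [_ SD] n n1.
have TDTx : forall x, T (Tdag (T x)) = T x by move=> x; exact: (congr1 (fun f => f x) TDT).
have DTDx : forall x, Tdag (T (Tdag x)) = Tdag x by move=> x; exact: (congr1 (fun f => f x) DTD).
have SDx : forall x, Tstar (Tdag x) = Tdag (Tstar x) by move=> x; exact: (congr1 (fun f => f x) SD).
have aT : adj ip T Tstar by [].
have aTs : adj ip Tstar T by exact: adj_sym.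
have aP : adj ip (T \o Tdag) (T \o Tdag) by [].
have aQ : adj ip (Tdag \o T) (Tdag \o T) by [].
have TsP : forall x, Tstar (T (Tdag x)) = Tstar x.
  have h1 : adj ip (Tstar \o (T \o Tdag)) T.
    apply: (adj_eqR (X := (T \o Tdag) \o T)); first exact: adj_comp.
    by move=> y /=; rewrite TDTx.
  by move=> x; apply: (adj_uniqL hip h1 aTs x).
have QTs : forall x, Tdag (T (Tstar x)) = Tstar x.
  have h1 : adj ip ((Tdag \o T) \o Tstar) T.
    apply: (adj_eqR (X := T \o (Tdag \o T))); first exact: (adj_comp aQ aTs).
    by move=> y /=; rewrite TDTx.
  by move=> x; apply: (adj_uniqL hip h1 aTs x).
case: n n1 => [//|m] _.
set S := fun x => iter m.+1 T x.
have linS : lin S by exact: lin_iter.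
have ST : forall x, S (T x) = T (S x) by move=> x; rewrite /S -iterSr.
split.
-
  move=> [_ nEP].
  have nEPx : forall x, S (Tdag x) = Tdag (S x) by move=> x; exact: (congr1 (fun f => f x) nEP).
  have Ppow : forall k x, T (Tdag (iter k T (T (Tdag x)))) = iter k T (T (Tdag x)).
    by move=> [|k] x /=; rewrite TDTx.
  have star : forall x, T (T (Tstar x)) = T (Tstar (T (T (Tdag x)))).
    have H1 : forall z, T (Tstar (Tstar z)) = T (Tdag (Tstar (T (Tstar z)))).
      by move=> z; rewrite -{1}[Tstar z]QTs SDx.
    have hA := adj_comp aT (adj_comp aT aTs).
    have hB := adj_comp aT (adj_comp aTs (adj_comp aT aP)).
    have hB' : adj ip (T \o (Tstar \o (T \o (T \o Tdag)))) ((T \o Tstar) \o Tstar).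
      by apply: (adj_eqR hB) => y /=; rewrite H1.
    move=> x; exact: (adj_uniqL hip hA hB' x).
  have one : forall k x, iter k.+1 T (Tstar x) = T (Tstar (iter k T (T (Tdag x)))).
    elim=> [|k IH] x; first by rewrite /= TsP.
    by rewrite [LHS]iterS IH star Ppow.
  have YPX : forall x, S (Tstar x) = T (Tdag (Tstar (S x))).
    move=> x; have e : S (Tdag x) = iter m T (T (Tdag x)) by rewrite /S iterSr.
    by rewrite -SDx -nEPx e /S one.
  have XYQ : forall x, Tstar (S x) = S (Tstar (Tdag (T x))).
    move=> x; rewrite SDx nEPx /S one TDTx QTs.
    by rewrite iterSr.
  rewrite /is_nnormal; apply: functional_extensionality => x /=.
  have PS : forall y, T (Tdag (S y)) = S y by move=> y; rewrite /S iterS TDTx.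
  change (S (Tstar x) = Tstar (S x)).
  by rewrite YPX {1}XYQ PS -XYQ.
- move=> nN; split; first exact: clT.
  have nNx : forall x, S (Tstar x) = Tstar (S x) by move=> x; exact: (congr1 (fun f => f x) nN).
  set S' := fun x => iter m.+1 Tstar x.
  have aS : adj ip S S' by exact: adj_iter.
  have aS' : adj ip S' S by exact: adj_sym.
  have linS' : lin S' by exact: lin_iter.
  have S'Ts : forall x, S' (Tstar x) = Tstar (S' x) by move=> x; rewrite /S' -iterSr.
  have TS' : forall x, S' (T x) = T (S' x).
    have h1 : adj ip (T \o S') (S \o Tstar) := adj_sym hip (adj_comp aS aTs).
    have h2 : adj ip (S' \o T) (S \o Tstar).
      apply: (adj_eqR (X := Tstar \o S)); first exact: (adj_sym hip (adj_comp aTs aS)).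
      by move=> y /=; rewrite nNx.
    by move=> x; exact: (adj_uniqL hip h2 h1 x).
  have kerTs : forall w, Tstar w = 0 -> Tdag w = 0.
    move=> w hw.
    have Pw : T (Tdag w) = 0.
      apply: (ext_l hip) => z; rewrite (ip0l hip) (adjP w z : ip (T (Tdag w)) z = ip w (T (Tdag z))).
      rewrite (ip_conj hip) adjT hw (ip0r hip).
      by rewrite conjC0.
    by rewrite -DTDx Pw (lin0 linDg).
  have L1 : forall U, lin U -> (forall x, U (T x) = T (U x)) ->
      (forall x, U (Tstar x) = Tstar (U x)) ->
      forall y, Tdag (U y) = Tdag (T (U (Tdag y))).
    move=> U linU UT UTs y.
    have e : U y = U (T (Tdag y)) + U (y - T (Tdag y)).
      by rewrite (linB linU) addrC subrK.
    have h : Tstar (U (y - T (Tdag y))) = 0.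
      by rewrite -UTs (linB linTs) TsP subrr (lin0 linU).
    by rewrite e (linD linDg) (kerTs _ h) addr0 UT.
  have L : forall U, lin U -> (forall x, U (T x) = T (U x)) ->
      (forall x, U (Tstar x) = Tstar (U x)) ->
      forall x, Tdag (T (U x)) = Tdag (T (U (Tdag (T x)))).
    by move=> U linU UT UTs x; rewrite -UT (L1 U linU UT UTs).
  have SQ : forall x, S (Tdag (T x)) = Tdag (T (S x)).
    have LS' := L S' linS' TS' S'Ts.
    have h1 : adj ip (S \o (Tdag \o T)) ((Tdag \o T) \o S') :=
      adj_sym hip (adj_comp aQ aS').
    have h2 : adj ip ((Tdag \o T) \o (S \o (Tdag \o T))) ((Tdag \o T) \o S').
      apply: (adj_eqR (X := ((Tdag \o T) \o S') \o (Tdag \o T))).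
        exact: (adj_sym hip (adj_comp (adj_comp aQ aS') aQ)).
      by move=> y /=; rewrite -LS'.
    move=> x; have := adj_uniqL hip h1 h2 x; rewrite /= => ->.
    by rewrite -(L S linS ST nNx).
  apply: functional_extensionality => x /=.
  change (S (Tdag x) = Tdag (S x)).
  by rewrite -{1}DTDx SQ -(L1 S linS ST nNx).
Qed.
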